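(* Let $M>0$, let $f:[0,1]\to\mathbb{R}$ satisfy $|f(x)-f(y)|\le M|x-y|$ for all $x,y\in[0,1]$, and let $g(x)=f(x)\bmod 1\in[0,1)$. Let $n\ge2$ be an integer and $x_i=\frac{i-1}{n-1}$ for $i=1,\dots,n$. Let $\delta\in[0,1/2]$ and let $\hat g:[0,1]\to[0,1)$ satisfy $d_w(\hat g(x_i),g(x_i))\le\delta$ for all $i$. Define $\tilde f(x_1)=\hat g(x_1)$ and, for $i=2,\dots,n$, $$\tilde f(x_i)=\tilde f(x_{i-1})+\begin{cases}\hat g(x_i)-\hat g(x_{i-1}) & \text{if } |\hat g(x_i)-\hat g(x_{i-1})|<1/2,\\ 1+\hat g(x_i)-\hat g(x_{i-1}) & \text{if } \hat g(x_i)-\hat g(x_{i-1})<-1/2,\\ -1+\hat g(x_i)-\hat g(x_{i-1}) & \text{if } \hat g(x_i)-\hat g(x_{i-1})>1/2.\end{cases}$$ If $2\delta+\frac{M}{n-1}<\frac12$, then there exists $q^\star\in\mathbb{Z}$ such that $|\tilde f(x_i)+q^\star-f(x_i)|\le\delta$ for all $i=1,\dots,n$.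
   Context: For $a\in\mathbb{R}$, $a\bmod 1\in[0,1)$ denotes $a-\lfloor a\rfloor$. The wrap-around distance on $[0,1)$ is $d_w(a,b)=\min(|a-b|,1-|a-b|)$. *)

(* Defs.v *)
From Stdlib Require Import Reals Lra Lia.
Open Scope R_scope.

(* a mod 1 = a - floor a ; Int_part a = up a - 1 = floor a *)
Definition mod1 (a : R) : R := a - IZR (Int_part a).

Definition dw (a b : R) : R := Rmin (Rabs (a - b)) (1 - Rabs (a - b)).

(* grid point x_{i+1} = i/(n-1), 0-based index i = 0..n-1 *)
Definition grid (n i : nat) : R := INR i / INR (n - 1).

Definition unwrap_step (d : R) : R :=
  if Rlt_dec (Rabs d) (1/2) then d
  else if Rlt_dec d (-(1/2)) then 1 + d
  else if Rlt_dec (1/2) d then -1 + d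
  else d. (* |d| = 1/2 exactly: not covered by the paper; irrelevant under hypotheses *)

Fixpoint ftilde (ghat : R -> R) (n : nat) (i : nat) : R :=
  match i with
  | O => ghat (grid n 0)
  | S j => ftilde ghat n j + unwrap_step (ghat (grid n (S j)) - ghat (grid n j))
  end.

(* Main.v *)
Require Import Defs.
From Stdlib Require Import Reals ZArith.
From Stdlib Require Import Lra Lia.
Open Scope R_scope.

Lemma unwrap_lemma (d : R) (K : Z) :
  Rabs d < 1 -> Rabs (d + IZR K) < 1/2 -> unwrap_step d = d + IZR K.
Proof.
  intros Hd HK.
  apply Rabs_def2 in Hd. apply Rabs_def2 in HK. destruct Hd as [Hd1 Hd2]. destruct HK as [HK1 HK2].
  unfold unwrap_step.
  destruct (Rlt_dec (Rabs d) (1/2)) as [H1|H1].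
  - apply Rabs_def2 in H1. destruct H1.
    assert (K = 0%Z).
    { assert (IZR K < 1) by lra. assert (-1 < IZR K) by lra.
      apply lt_IZR in H1. apply lt_IZR in H2. lia. }
    subst. simpl. lra.
  - destruct (Rlt_dec d (-(1/2))) as [H2|H2].
    + assert (K = 1%Z).
      { assert (Ka : IZR K < 2) by lra. assert (Kb : 0 < IZR K) by lra.
        apply lt_IZR in Ka. apply lt_IZR in Kb. lia. }
      subst. simpl. lra.
    + destruct (Rlt_dec (1/2) d) as [H3|H3].
      * assert (K = (-1)%Z).
        { assert (Ka : IZR K < 0) by lra. assert (Kb : -2 < IZR K) by lra.
          apply lt_IZR in Ka. apply lt_IZR in Kb. lia. }
        subst. simpl. lra.
      * exfalso.
        destruct (Rcase_abs d) as [Hn|Hp].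
        -- rewrite Rabs_left in H1 by lra.
           assert (Ka : IZR K < 1) by lra. assert (Kb : 0 < IZR K) by lra.
           apply lt_IZR in Ka. apply lt_IZR in Kb. lia.
        -- rewrite Rabs_right in H1 by lra.
           assert (Ka : IZR K < 0) by lra. assert (Kb : -1 < IZR K) by lra.
           apply lt_IZR in Ka. apply lt_IZR in Kb. lia.
Qed.

Lemma exists_k (a b delta : R) :
  0 <= a < 1 -> dw a (mod1 b) <= delta -> delta <= 1/2 ->
  exists k : Z, Rabs (a + IZR k - b) <= delta.
Proof.
  intros Ha Hdw Hdel.
  destruct (base_Int_part b) as [B1 B2].
  unfold dw, mod1 in Hdw.
  set (z := Int_part b) in *.
  unfold Rmin in Hdw.
  destruct (Rle_dec _ _) as [H|H].
  - exists z. replace (a + IZR z - b) with (a - (b - IZR z)) by ring. exact Hdw.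
  - destruct (Rcase_abs (a - (b - IZR z))) as [Hn|Hp].
    + rewrite Rabs_left in Hdw by lra.
      exists (z + 1)%Z. rewrite plus_IZR. simpl.
      apply Rabs_le. lra.
    + rewrite Rabs_right in Hdw by lra.
      exists (z - 1)%Z. rewrite minus_IZR. simpl.
      apply Rabs_le. lra.
Qed.

Theorem mainTheorem2 (M : R) (f ghat : R -> R) (n : nat) (delta : R) :
  0 < M ->
  (forall x y, 0 <= x <= 1 -> 0 <= y <= 1 -> Rabs (f x - f y) <= M * Rabs (x - y)) ->
  (2 <= n)%nat ->
  0 <= delta <= 1/2 ->
  (forall x, 0 <= x <= 1 -> 0 <= ghat x < 1) ->
  (forall i, (i < n)%nat -> dw (ghat (grid n i)) (mod1 (f (grid n i))) <= delta) ->
  2 * delta + M / INR (n - 1) < 1/2 ->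
  exists q : Z, forall i, (i < n)%nat ->
    Rabs (ftilde ghat n i + IZR q - f (grid n i)) <= delta.
Proof.
  intros HM Hlip Hn Hdel Hg Hdw Hsmall.
  assert (Hpos : 0 < INR (n - 1)) by (apply lt_0_INR; lia).
  assert (Hgrid : forall i, (i < n)%nat -> 0 <= grid n i <= 1).
  { intros i Hi. unfold grid. split.
    - apply Rmult_le_pos; [apply pos_INR | apply Rlt_le, Rinv_0_lt_compat, Hpos].
    - assert (INR i <= INR (n-1)) by (apply le_INR; lia).
      unfold Rdiv. apply (Rmult_le_reg_r (INR (n-1))); [exact Hpos|].
      rewrite Rmult_assoc, Rinv_l by lra. lra. }
  assert (Hgb : forall i, (i < n)%nat -> 0 <= ghat (grid n i) < 1).
  { intros i Hi. apply Hg. apply Hgrid. exact Hi. }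
  assert (Hk : forall i, (i < n)%nat -> exists k : Z,
             Rabs (ghat (grid n i) + IZR k - f (grid n i)) <= delta).
  { intros i Hi. apply (exists_k _ _ delta); [apply Hgb; exact Hi| apply Hdw; exact Hi| lra]. }
  destruct (Hk 0%nat ltac:(lia)) as [k0 Hk0].
  exists k0.
  assert (Hind : forall i, (i < n)%nat -> exists k : Z,
             Rabs (ghat (grid n i) + IZR k - f (grid n i)) <= delta /\
             ftilde ghat n i + IZR k0 = ghat (grid n i) + IZR k).
  { induction i as [|j IH]; intros Hi.
    - exists k0. split; [exact Hk0|]. simpl. reflexivity.
    - destruct (IH ltac:(lia)) as [kj [Hkj Hfj]].
      destruct (Hk (S j) Hi) as [ks Hks].
      exists ks. split; [exact Hks|].
      simpl.
      assert (Hstep : Rabs (f (grid n (S j)) - f (grid n j)) <= M / INR (n - 1)).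
      { eapply Rle_trans. apply Hlip; apply Hgrid; lia.
        unfold grid. rewrite S_INR.
        replace ((INR j + 1) / INR (n - 1) - INR j / INR (n - 1)) with (1 / INR (n-1))
          by (field; lra).
        rewrite Rabs_right.
        - unfold Rdiv. lra.
        - apply Rle_ge, Rlt_le, Rdiv_lt_0_compat; lra. }
      rewrite (unwrap_lemma _ (ks - kj)).
      + rewrite minus_IZR. lra.
      + destruct (Hgb (S j) Hi). destruct (Hgb j ltac:(lia)).
        apply Rabs_def1; lra.
      + rewrite minus_IZR.
        replace (ghat (grid n (S j)) - ghat (grid n j) + (IZR ks - IZR kj)) with
          ((ghat (grid n (S j)) + IZR ks - f (grid n (S j)))
           - (ghat (grid n j) + IZR kj - f (grid n j))
           + (f (grid n (S j)) - f (grid n j))) by ring.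
        eapply Rle_lt_trans. apply Rabs_triang.
        eapply Rle_lt_trans. apply Rplus_le_compat_r. apply Rabs_triang. rewrite Rabs_Ropp. lra. }
  intros i Hi. destruct (Hind i Hi) as [k [Hk1 Hk2]].
  rewrite Hk2. exact Hk1.
Qed.
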